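(* A paratopological group $G$ with identity $e$ is dense-connected if and only if $UV^{-1}=G$ for all open neighborhoods $U$ and $V$ of $e$.
   Context: A paratopological group is a group with a topology for which multiplication $G\times G\to G$ is jointly continuous (inversion need not be continuous; no separation axioms assumed). A space is dense-connected if every dense subset of it (with the subspace topology) is connected. *)

(* Defs.v *)
From HB Require Import structures.
From mathcomp Require Import all_boot all_order all_algebra.
From mathcomp Require Import all_classical all_reals all_analysis.
Set Implicit Arguments. Unset Strict Implicit. Unset Printing Implicit Defensive.
Local Open Scope classical_set_scope.

Definition is_group (G : Type) (mul : G -> G -> G) (inv : G -> G) (e : G) : Prop :=
  [/\ (forall x y z, mul x (mul y z) = mul (mul x y) z),
      (forall x, mul e x = x /\ mul x e = x) &
      (forall x, mul (inv x) x = e /\ mul x (inv x) = e)].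

(* Paratopological group: group with a topology making multiplication
   G x G -> G jointly continuous (product topology); inversion need not be
   continuous; no separation axioms. *)
Definition paratopological_group (G : topologicalType)
  (mul : G -> G -> G) (inv : G -> G) (e : G) : Prop :=
  is_group mul inv e /\ continuous (fun p : G * G => mul p.1 p.2).

(* Every dense subset is connected in the subspace topology
   (mathcomp-analysis' [connected A] is connectedness of A as a subspace). *)
Definition dense_connected (G : topologicalType) : Prop :=
  forall D : set G, dense D -> connected D.

Definition set_mul_inv (G : Type) (mul : G -> G -> G) (inv : G -> G)
  (U V : set G) : set G :=
  [set z | exists2 u, U u & exists2 v, V v & z = mul u (inv v)].

(* Main.v *)
Require Import Defs.
From mathcomp Require Import all_boot all_order all_algebra.
From mathcomp Require Import all_classical all_reals all_analysis.
Local Open Scope classical_set_scope.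

Lemma lmul_open (G : topologicalType) (mul : G -> G -> G) (a : G) (A : set G) :
  continuous (fun p : G * G => mul p.1 p.2) -> open A ->
  open [set x | A (mul a x)].
Proof.
move=> hc oA.
have : continuous (fun x => mul a x).
  move=> x; apply: (@continuous2_cvg _ G G G _ _ (fun _ => a) id mul a x (hc (a, x))).
  - exact: cvg_cst.
  - exact: cvg_id.
by move/continuousP => /(_ A oA).
Qed.

Lemma inv_uniq (G : Type) (mul : G -> G -> G) (inv : G -> G) (e : G) :
  (forall x y z, mul x (mul y z) = mul (mul x y) z) ->
  (forall x, mul e x = x /\ mul x e = x) ->
  (forall x, mul (inv x) x = e /\ mul x (inv x) = e) ->
  forall a b, mul a b = e -> b = inv a.
Proof.
move=> mA me mi a b h.
by rewrite -(proj1 (me b)) -(proj1 (mi a)) -mA h (proj2 (me _)).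
Qed.

Lemma dc_hyper (G : topologicalType) : dense_connected G ->
  forall A B : set G, open A -> open B -> A !=set0 -> B !=set0 -> A `&` B !=set0.
Proof.
move=> dc A V oA oV [a Aa] [v Vv].
case: (pselect (A `&` V !=set0)) => // nAV; exfalso.
have AV : forall x, A x -> V x -> False by move=> x ? ?; apply: nAV; exists x.
have Acl : forall x, A x -> ~ closure V x.
  move=> x Ax /(_ A) []; first by apply: open_nbhs_nbhs; split.
  by move=> y [Vy Ay]; exact: (AV y).
pose D := ~` closure V `|` V.
have dD : dense D.
  move=> W [w0 Ww] oW.
  have [[y [Oy Vy]]|nOV] := pselect (W `&` V !=set0).
    by exists y; split => //; right.
  have [oc|noc] := pselect (closure V w0).
    exfalso; apply: nOV; case: (oc W) => [|y [Vy Oy]]; first by apply: open_nbhs_nbhs; split.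
    by exists y.
  by exists w0; split => //; left.
have := dc D dD V; rewrite -/D => h.
have eV : V = D.
  apply: h.
  - by exists v.
  - exists V => //; apply/seteqP; split => [x Vx|x [] //]; by split => //; right.
  - exists (closure V); first exact: closed_closure.
    apply/seteqP; split => [x Vx|x [[nc|Vx] cl]] //.
    by split; [right|exact: subset_closure].
have : D a by left; exact: Acl.
by rewrite -eV => Va; exact: (AV a).
Qed.

Lemma hyper_dc (G : topologicalType) :
  (forall A B : set G, open A -> open B -> A !=set0 -> B !=set0 -> A `&` B !=set0) ->
  dense_connected G.
Proof.
move=> hy D dD B [b Bb] [P1 oP1 e1] [C cC e2].
case: (pselect (B = D)) => // nBD; exfalso.
have [d [Dd nBd]] : exists d, D d /\ ~ B d.
  case: (pselect (exists d, D d /\ ~ B d)) => // hn; exfalso; apply: nBD; apply/seteqP; split.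
    by move=> x Bx; move: Bx; rewrite e1 => -[].
  by move=> x Dx; case: (pselect (B x)) => // nB; exfalso; apply: hn; exists x.
have nCd : ~ C d by move=> Cd; apply: nBd; rewrite e2.
have [x [[P1x Cx] Dx]] : (P1 `&` ~` C) `&` D !=set0.
  apply: dD; last by apply: openI => //; rewrite openC.
  apply: hy => //; first by rewrite openC.
  - by exists b; move: Bb; rewrite e1 => -[].
  - by exists d.
apply: Cx.
have : B x by rewrite e1.
by rewrite e2 => -[].
Qed.

Theorem theorem4p9 (G : topologicalType) (mul : G -> G -> G) (inv : G -> G) (e : G) :
  paratopological_group mul inv e ->
  (dense_connected G <->
   forall U V : set G, open U -> U e -> open V -> V e ->
     set_mul_inv mul inv U V = setT).
Proof.
move=> [[mA me mi] hc]; split.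
- move=> /dc_hyper hy U V oU Ue oV Ve; apply/seteqP; split => // z _.
  have := hy U [set x | V (mul (inv z) x)] oU (lmul_open _ _ _ _ hc oV).
  case.
  + by exists e.
  + by exists z => /=; rewrite (proj1 (mi z)).
  + move=> u [Uu /= Vu]; exists u => //; exists (mul (inv z) u) => //.
    have -> : inv (mul (inv z) u) = mul (inv u) z.
      symmetry; apply: (@inv_uniq G mul inv e mA me mi).
      by rewrite -mA (mA u) (proj2 (mi u)) (proj1 (me z)) (proj1 (mi z)).
    by rewrite mA (proj2 (mi u)) (proj1 (me z)).
- move=> h; apply: hyper_dc => A B oA oB [a Aa] [b Bb].
  have := h [set x | A (mul a x)] [set x | B (mul b x)]
    (lmul_open _ _ _ _ hc oA) _ (lmul_open _ _ _ _ hc oB) _.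
  rewrite /= (proj2 (me a)) (proj2 (me b)) => /(_ Aa Bb) /seteqP [_ /(_ (mul (inv a) b) I)].
  move=> [u Au [v Bv E]].
  exists (mul a u); split => //.
  have -> : mul a u = mul b v.
    rewrite -[in LHS](proj2 (me u)) -(proj1 (mi v)) !mA -(mA a u) -E.
    by rewrite mA (proj2 (mi a)) (proj1 (me b)).
  by [].
Qed.
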